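(* For every $n\ge 1$ and every Boolean function $f:\{-1,1\}^n\to\{-1,1\}$, we have $s(f)\ge \sqrt{\deg(f)}$.
   Context: For $x\in\{-1,1\}^n$, the sensitivity $s(f,x)$ is the number of indices $i\in[n]$ such that $f(x)\ne f(x^{(i)})$, where $x^{(i)}$ is $x$ with its $i$-th coordinate negated; $s(f)=\max_x s(f,x)$. $\deg(f)$ is the degree of the unique multilinear real polynomial agreeing with $f$ on $\{-1,1\}^n$. *)

(* Defs.v *)
From HB Require Import structures.
From mathcomp Require Import all_boot all_order all_algebra.
Set Implicit Arguments. Unset Strict Implicit. Unset Printing Implicit Defensive.
Import Order.TTheory GRing.Theory Num.Theory.
Local Open Scope ring_scope.

(* Points of {-1,1}^n, encoded by booleans: coordinate b stands for pm b,
   where pm false = 1 and pm true = -1. *)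
Definition cube (n : nat) := {ffun 'I_n -> bool}.

Definition pm (R : nzRingType) (b : bool) : R := if b then -1 else 1.

Definition boolfun (n : nat) := cube n -> bool.

Definition flip (n : nat) (x : cube n) (i : 'I_n) : cube n :=
  [ffun j => if j == i then ~~ x j else x j].

Definition sens_at (n : nat) (f : boolfun n) (x : cube n) : nat :=
  #|[set i : 'I_n | f x != f (flip x i)]|.

Definition sensitivity (n : nat) (f : boolfun n) : nat :=
  (\max_(x : cube n) sens_at f x)%N.

(* A multilinear real polynomial in n variables, given by its coefficients:
   c S is the coefficient of the monomial prod_{i in S} x_i. *)
Definition mlpoly (R : nzRingType) (n : nat) := {set 'I_n} -> R.

Definition mleval (R : nzRingType) (n : nat) (c : mlpoly R n) (x : cube n) : R :=
  \sum_(S : {set 'I_n}) c S * \prod_(i in S) pm R (x i).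

Definition mldeg (R : nzRingType) (n : nat) (c : mlpoly R n) : nat :=
  (\max_(S : {set 'I_n} | c S != 0%R) #|S|)%N.

(* c agrees with f on {-1,1}^n (such c exists and is unique, so
   deg f = mldeg c for any agreeing c). *)
Definition agrees (R : nzRingType) (n : nat) (f : boolfun n) (c : mlpoly R n) : Prop :=
  forall x : cube n, mleval c x = pm R (f x).

(* Main.v *)
Require Import Defs.
From HB Require Import structures.
From mathcomp Require Import all_boot all_order all_algebra.
From mathcomp Require Import ring lra zify.
Import Order.TTheory GRing.Theory Num.Theory.
Local Open Scope ring_scope.
Set Implicit Arguments. Unset Strict Implicit. Unset Printing Implicit Defensive.


Lemma flipE n (x : cube n) i j : flip x i j = if j == i then ~~ x j else x j.
Proof. by rewrite /flip ffunE. Qed.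

Lemma flipK n (x : cube n) i : flip (flip x i) i = x.
Proof. by apply/ffunP=> j; rewrite !flipE; case: eqP => //; rewrite negbK. Qed.

Lemma flipC n (x : cube n) i j : flip (flip x i) j = flip (flip x j) i.
Proof.
apply/ffunP=> k; rewrite !flipE.
by case: (k =P i); case: (k =P j) => //= -> ->.
Qed.

Lemma flip_inj n i : injective (fun x : cube n => flip x i).
Proof. by apply: (@can_inj _ _ _ (fun x => flip x i)) => x; apply: flipK. Qed.

Lemma pm2 (R : nzRingType) b : pm R b * pm R b = 1.
Proof. by case: b; rewrite /pm ?mulrNN mulr1. Qed.

Lemma pmN (R : nzRingType) b : pm R (~~ b) = - pm R b.
Proof. by case: b; rewrite /pm ?opprK. Qed.

Definition chi (R : nzRingType) n (S : {set 'I_n}) (x : cube n) : R :=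
  \prod_(i in S) pm R (x i).

Lemma chi2 (R : comNzRingType) n S (x : cube n) : chi R S x * chi R S x = 1.
Proof. by rewrite /chi -big_split /=; apply: big1 => i _; rewrite pm2. Qed.

Lemma chi_flip (R : comNzRingType) n S (x : cube n) u :
  chi R S (flip x u) = if u \in S then - chi R S x else chi R S x.
Proof.
rewrite /chi; case: ifP => uS.
  rewrite (bigD1 u) //= [in RHS](bigD1 u) //= flipE eqxx pmN mulNr; congr (- (_ * _)).
  by apply: eq_bigr => i /andP [_ /negbTE iu]; rewrite flipE iu.
apply: eq_bigr => i iS; rewrite flipE; case: eqP => // iu.
by rewrite -iu iS in uS.
Qed.

Lemma sum_flip (R : nzRingType) n (F : cube n -> R) u :
  \sum_x F x = \sum_x F (flip x u).
Proof. exact: (reindex_inj (@flip_inj n u)). Qed.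

Lemma chi_orth (R : realFieldType) n (S T : {set 'I_n}) :
  \sum_(x : cube n) chi R T x * chi R S x = if T == S then #|{: cube n}|%:R else 0.
Proof.
case: eqP => [->|/eqP TS].
  by rewrite (eq_bigr (fun _ => 1)) ?sumr_const // => x _; rewrite chi2.
have [u uTS] : exists u, (u \in T) != (u \in S).
  apply/existsP; rewrite -negb_forall; apply: contra TS => /forallP h.
  by apply/eqP/setP => u; apply/eqP/h.
set s := \sum__ _; have : s = - s.
  rewrite {1}/s (sum_flip _ u) /s -sumrN; apply: eq_bigr => x _.
  rewrite !chi_flip; move: uTS; case: (u \in T); case: (u \in S) => //= _.
    by rewrite mulNr.
  by rewrite mulrN.
move=> h; lra.
Qed.

Lemma fourier (R : realFieldType) n (f : boolfun n) (c : mlpoly R n) :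
  agrees f c -> forall S,
  \sum_(x : cube n) pm R (f x) * chi R S x = c S * #|{: cube n}|%:R.
Proof.
move=> hc S.
transitivity (\sum_(T : {set 'I_n}) c T * \sum_(x : cube n) chi R T x * chi R S x).
  under eq_bigr => x _ do rewrite -hc /mleval mulr_suml.
  rewrite exchange_big /=; apply: eq_bigr => T _; rewrite mulr_sumr.
  by apply: eq_bigr => x _; rewrite mulrA.
rewrite (bigD1 S) //= chi_orth eqxx big1 ?addr0 //.
by move=> T TS; rewrite chi_orth (negbTE TS) mulr0.
Qed.


Definition sg (R : nzRingType) n (S : {set 'I_n}) (x : cube n) (i : 'I_n) : R :=
  \prod_(k in S | (i < k)%N) pm R (x k).

Definition Aop (R : nzRingType) n (S : {set 'I_n}) (v : cube n -> R) (x : cube n) : R :=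
  \sum_(i in S) sg R S x i * v (flip x i).

Lemma sg2 (R : comNzRingType) n S (x : cube n) i : sg R S x i * sg R S x i = 1.
Proof. by rewrite /sg -big_split /=; apply: big1 => k _; rewrite pm2. Qed.

Lemma sg_flip (R : comNzRingType) n S (x : cube n) i j :
  sg R S (flip x j) i = if (i < j)%N && (j \in S) then - sg R S x i else sg R S x i.
Proof.
rewrite /sg; case: ifP => /andP.
  case=> ij jS.
  rewrite (bigD1 j) ?jS ?ij //= [in RHS](bigD1 j) ?jS ?ij //= flipE eqxx pmN mulNr.
  congr (- (_ * _)).
  by apply: eq_bigr => k /andP [_ /negbTE kj]; rewrite flipE kj.
move=> h; apply: eq_bigr => k /andP [kS ik]; rewrite flipE; case: eqP => // kj.
by case: h; rewrite -kj.
Qed.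

Lemma sum_delta (R : nzRingType) (I : finType) (A : pred I) i (a : R) :
  i \in A -> \sum_(j in A) (if i == j then a else 0) = a.
Proof.
move=> iA; rewrite (bigD1 i) //= eqxx big1 ?addr0 // => j /andP [_ ji].
by rewrite eq_sym (negbTE ji).
Qed.

Lemma Aop2 (R : realFieldType) n S (v : cube n -> R) x :
  Aop S (Aop S v) x = #|S|%:R * v x.
Proof.
pose G i j := sg R S x i * (sg R S (flip x i) j * v (flip (flip x i) j)).
have E : Aop S (Aop S v) x = \sum_(i in S) \sum_(j in S) G i j.
  by apply: eq_bigr => i _; rewrite /Aop mulr_sumr.
have K : forall i j, i \in S -> j \in S ->
    G i j + G j i = if i == j then v x + v x else 0.
  move=> i j iS jS; rewrite /G; case: eqP => [<-|/eqP ij].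
    by rewrite sg_flip ltnn /= flipK mulrA sg2 mul1r.
  rewrite !sg_flip iS jS !andbT flipC.
  case: (ltngtP i j) => h.
  - by ring.
  - by ring.
  - by move: ij; rewrite (val_inj h) eqxx.
have : Aop S (Aop S v) x + Aop S (Aop S v) x = (v x + v x) *+ #|S|.
  rewrite {1}E exchange_big /= E -big_split /= -sumr_const.
  apply: eq_bigr => i iS; rewrite -big_split /= -(sum_delta (v x + v x) iS).
  by apply: eq_bigr => j jS; rewrite addrC K.
move=> h; rewrite -mulr_natl in h.
have h2 : (Aop S (Aop S v) x - #|S|%:R * v x) *+ 2 = 0.
  have h3 : (Aop S (Aop S v) x - #|S|%:R * v x) *+ 2 =
    (Aop S (Aop S v) x + Aop S (Aop S v) x) - #|S|%:R * (v x + v x).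
    by rewrite mulr2n; ring.
  by rewrite h3 h subrr.
move/eqP: h2; rewrite mulrn_eq0 /= subr_eq0 => /eqP //.
Qed.

Definition vec (R : nzRingType) n S (s : R) (a : cube n -> R) (x : cube n) :=
  Aop S a x + s * a x.

Lemma Aop_vec (R : rcfType) n S (a : cube n -> R) x :
  Aop S (vec S (Num.sqrt #|S|%:R) a) x = Num.sqrt #|S|%:R * vec S (Num.sqrt #|S|%:R) a x.
Proof.
set s := Num.sqrt _.
have ss : s * s = #|S|%:R by rewrite -expr2 sqr_sqrtr ?ler0n.
have -> : Aop S (vec S s a) x = Aop S (Aop S a) x + s * Aop S a x.
  rewrite {1}/Aop /vec mulr_sumr -big_split /=; apply: eq_bigr => i _.
  rewrite /Aop; ring.
rewrite (Aop2 (R:=R)) /vec -ss; ring.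
Qed.

Lemma vec_flip (R : nzRingType) n (S : {set 'I_n}) (s : R) (a : cube n -> R) (t : 'I_n) (y : cube n) :
  t \in S -> (forall z : cube n, z t -> a z = 0) -> ~~ y t ->
  vec S s a (flip y t) = sg R S (flip y t) t * a y.
Proof.
move=> tS a0 yt.
have xt : flip y t t by rewrite flipE eqxx.
rewrite /vec (a0 _ xt) mulr0 addr0 /Aop (bigD1 t) //= flipK big1 ?addr0 //.
move=> k /andP [_ kt]; rewrite a0 ?mulr0 // flipE.
by rewrite eq_sym (negbTE kt).
Qed.


Lemma kernel_exists (R : fieldType) (I J : finType) (P : {set I}) (Q : {set J})
  (M : J -> I -> R) : (#|Q| < #|P|)%N ->
  exists a : I -> R, (forall i, i \notin P -> a i = 0) /\ (exists i, a i != 0) /\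
    (forall j, j \in Q -> \sum_i M j i * a i = 0).
Proof.
move=> hQP.
pose Mx : 'M[R]_(#|P|, #|Q|) := \matrix_(k, l) M (enum_val l) (enum_val k).
pose K := kermx Mx.
have rK : (0 < \rank K)%N by rewrite mxrank_ker; have := rank_leq_col Mx; lia.
have nzK : K != 0 by rewrite -mxrank_eq0 -lt0n.
have [k [l Kkl]] : exists k l, K k l != 0.
  case: (pickP (fun kl : 'I_#|P| * 'I_#|P| => K kl.1 kl.2 != 0)) => [[k l] /= H|h].
    by exists k, l.
  case/eqP: nzK; apply/matrixP => k l; rewrite [RHS]mxE.
  by have := h (k, l); rewrite /= => /negbFE /eqP.
have rM : row k K *m Mx = 0 by rewrite -row_mul mulmx_ker row0.
pose a i := \sum_(m : 'I_#|P| | enum_val m == i) K k m.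
exists a; split; [|split].
- move=> i iP; apply: big1 => m /eqP e.
  by move: iP; rewrite -e enum_valP.
- exists (enum_val l); rewrite /a (big_pred1 l) // => m /=.
  by apply/eqP/eqP => [/enum_val_inj|->].
- move=> j jQ.
  have -> : \sum_i M j i * a i = \sum_(m : 'I_#|P|) M j (enum_val m) * K k m.
    under eq_bigr => i _ do rewrite /a mulr_sumr.
    rewrite (exchange_big_dep xpredT) //=; apply: eq_bigr => m _.
    by rewrite (big_pred1 (enum_val m)) // => i /=; rewrite eq_sym.
  have := congr1 (fun A : 'M[R]_(1, #|Q|) => A ord0 (enum_rank_in jQ j)) rM.
  rewrite !mxE => H; rewrite -[RHS]H; apply: eq_bigr => m _.
  by rewrite !mxE enum_rankK_in // mulrC.
Qed.


Lemma exists_max (R : rcfType) (T : finType) (y0 : T) (F : T -> R) :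
  exists x, forall y, F y <= F x.
Proof. by case: (@arg_maxP _ R T y0 xpredT F isT) => x _ h; exists x => y; apply: h. Qed.

Lemma norm_sg (R : rcfType) n S (x : cube n) i : `|sg R S x i| = 1.
Proof.
rewrite /sg normr_prod; apply: big1 => k _.
by rewrite /pm; case: (x k); rewrite ?normrN normr1.
Qed.

Lemma sum_delta' (R : nzRingType) (T : finType) (a : T -> R) y :
  \sum_i (y == i)%:R * a i = a y.
Proof.
rewrite (bigD1 y) //= eqxx mul1r big1 ?addr0 // => i iy.
by rewrite eq_sym (negbTE iy) mul0r.
Qed.

Lemma vec_lin (R : comNzRingType) n S (s : R) (a : cube n -> R) j :
  vec S s a j = \sum_i vec S s (fun y => (y == i)%:R) j * a i.
Proof.
rewrite /vec /Aop; symmetry.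
under eq_bigr => i _ do rewrite mulrDl mulr_suml.
rewrite big_split /= exchange_big /=.
have -> : \sum_i s * (j == i)%:R * a i = s * a j.
  by rewrite -(sum_delta' a j) mulr_sumr; apply: eq_bigr => i _; ring.
congr (_ + _); apply: eq_bigr => k _; rewrite -(sum_delta' a (flip j k)) mulr_sumr.
by apply: eq_bigr => i _; ring.
Qed.

Lemma huang_core (R : rcfType) n (S : {set 'I_n}) t (H : {set cube n}) :
  t \in S -> (#|~: H| < #|H|)%N ->
  exists x, x \in H /\ Num.sqrt (#|S|%:R : R) <= #|[set i in S | flip x i \in H]|%:R.
Proof.
move=> tS hH.
set s : R := Num.sqrt _.
pose P := [set y : cube n | ~~ y t].
have cP : #|P| = #|~: P|.
  rewrite -(card_imset P (@flip_inj n t)); apply: eq_card => y.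
  rewrite !inE negbK; apply/imsetP/idP => [[z]|yt].
    by rewrite inE => zt ->; rewrite flipE eqxx.
  by exists (flip y t); rewrite ?flipK // inE flipE eqxx yt.
have hQP : (#|~: H| < #|P|)%N.
  have e : (#|P| + #|~: P| = #|H| + #|~: H|)%N by rewrite !cardsC.
  lia.
have [a [aP [[i0 ai0] aeq]]] :=
  kernel_exists (fun j i => vec S s (fun y : cube n => (y == i)%:R) j) hQP.
pose v := vec S s a.
have vH : forall j, j \notin H -> v j = 0.
  by move=> j jH; rewrite /v vec_lin; apply: aeq; rewrite inE.
have a0 : forall z : cube n, z t -> a z = 0.
  by move=> z zt; apply: aP; rewrite inE zt.
have i0t : ~~ i0 t by apply: contraNN ai0 => /a0 ->.
have v0 : v (flip i0 t) != 0.
  rewrite /v vec_flip // mulf_neq0 //.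
  by apply/eqP => h; have := sg2 R S (flip i0 t) t; rewrite h mul0r => /eqP; rewrite eq_sym oner_eq0.
have [x xmax] := exists_max (flip i0 t) (fun y => `|v y|).
have vx : 0 < `|v x|.
  by apply: lt_le_trans _ (xmax (flip i0 t)); rewrite normr_gt0.
have xH : x \in H.
  by apply: contraLR vx => /vH ->; rewrite normr0 ltxx.
exists x; split => //.
rewrite -(ler_pM2r vx).
have eig : Aop S v x = s * v x by rewrite /v Aop_vec.
have -> : s * `|v x| = `|Aop S v x| by rewrite eig normrM ger0_norm ?sqrtr_ge0.
apply: le_trans (ler_norm_sum _ _ _) _.
rewrite (big_setID [set i in S | flip x i \in H]) /=.
rewrite [X in _ + X <= _]big1 ?addr0; last first.
  move=> i; rewrite !inE => /andP [/nandP [/negP iS|fH] iS']; first by rewrite iS' in iS.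
  by rewrite vH ?mulr0 ?normr0.
have sub : S :&: [set i in S | flip x i \in H] = [set i in S | flip x i \in H].
  by apply/setP => i; rewrite !inE; case: (i \in S).
rewrite sub mulr_natl -sumr_const; apply: ler_sum => i _.
by rewrite normrM norm_sg mul1r xmax.
Qed.


Lemma one_neq_m1 (R : realFieldType) : (1 : R) <> -1.
Proof. lra. Qed.

Unset Implicit Arguments. Set Strict Implicit.

Theorem corollary1p3 (R : rcfType) (n : nat) (hn : (0 < n)%N)
  (f : boolfun n) (c : mlpoly R n) (hc : agrees f c) :
  Num.sqrt ((mldeg c)%:R : R) <= (sensitivity f)%:R.
Proof.
case: (pickP (fun S => c S != 0)) => [S0 HS0|none]; last first.
  by rewrite /mldeg big_pred0 // sqrtr0 ler0n.
have [S cS ->] : {S | c S != 0 & mldeg c = #|S|}.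
  have := @eq_bigmax_cond _ (fun S => c S != 0) (fun S => #|S|).
  rewrite /mldeg => h.
  have [S SA e] : {S | c S != 0 & \max_(S | c S != 0) #|S| = #|S| }.
    by apply: h; apply/card_gt0P; exists S0.
  by exists S.
case: (set_0Vmem S) => [->|[t tS]].
  by rewrite cards0 sqrtr0 ler0n.
pose h x := pm R (f x) * chi R S x.
have hsum : \sum_x h x != 0.
  rewrite /h (fourier hc) mulf_neq0 // pnatr_eq0 -lt0n.
  by apply/card_gt0P; exists [ffun=> false].
have h2 : forall x, h x * h x = 1.
  move=> x; rewrite /h.
  have := chi2 R S x; have := pm2 R (f x); move=> a b.
  by rewrite mulrACA a b mulr1.
have hm1 : forall x, h x != 1 -> h x = -1.
  move=> x hx; have := h2 x; move/eqP; rewrite -expr2 sqrf_eq1 (negbTE hx) /=.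
  by move/eqP.
pose H1 := [set x | h x == 1].
have sumH : \sum_x h x = #|H1|%:R - #|~: H1|%:R.
  rewrite (bigID (fun x => x \in H1)) /=.
  rewrite (eq_bigr (fun _ => 1)); last by move=> x; rewrite inE => /eqP.
  rewrite [X in _ + X](eq_bigr (fun _ => -1)); last by move=> x; rewrite inE => /hm1.
  rewrite !sumr_const mulNrn; congr (_ - _%:R).
  apply: eq_card => x; by rewrite [RHS]inE.
have hne : #|H1| != #|~: H1|.
  by apply: contraNneq hsum => e; rewrite sumH e subrr.
have [H [hH hc1]] : exists H : {set cube n}, (#|~: H| < #|H|)%N /\
    forall x y, x \in H -> y \in H -> h x = h y.
  case: (ltngtP #|H1| #|~: H1|) => [lt|lt|eq]; last by rewrite eq eqxx in hne.
    exists (~: H1); rewrite setCK; split => // x y; rewrite !inE => hx hy.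
    by rewrite (hm1 _ hx) (hm1 _ hy).
  exists H1; split => // x y; rewrite !inE => /eqP -> /eqP ->.
  done.
have [x [xH hx]] := huang_core R tS hH.
apply: (le_trans hx); rewrite ler_nat.
apply: leq_trans (leq_bigmax (F := sens_at f) x).
apply: subset_leq_card; apply/subsetP => i; rewrite !inE => /andP [iS fH].
have := hc1 _ _ fH xH; rewrite /h chi_flip iS => e.
have e2 : - pm R (f (flip x i)) = pm R (f x).
  have := congr1 (fun z => z * chi R S x) e.
  by rewrite -!mulrA mulNr chi2 mulrN1 mulr1.
move: e2; rewrite /pm; case: (f x); case: (f (flip x i)) => //= e2.
  by move: e2; rewrite opprK => /one_neq_m1.
by move: e2 => /esym /one_neq_m1.
Qed.
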